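(* Assume (A1) and $b\ne0$. Define the equivalence relation $j\sim k$ on $[K]$ by $x(I_j,b)=x(I_k,b)$, with equivalence classes $\mathcal B_1,\dots,\mathcal B_T$. Then there exists $\epsilon>0$ such that for every $\tilde b\in\mathbb{R}^m$ with $P(\tilde b)\ne\emptyset$ and $\|\tilde b-b\|<\epsilon$, and for every $1\le t\le T$, there exists $k\in\mathcal B_t$ with $x(I_k,\tilde b)\in OPT(\tilde b)$.
   Context: $A\in\mathbb{R}^{m\times d}$ of full rank $m\le d$, $b\in\mathbb{R}^m$, $c\in\mathbb{R}^d$. For $\beta\in\mathbb{R}^m$, $(\mathrm{P}_\beta)$ is $\min c^Tx$ s.t. $Ax=\beta,x\ge0$, $P(\beta)=\{x:Ax=\beta,x\ge0\}$, and $OPT(\beta)$ its optimal set. A basis is $I\subseteq[d]$, $|I|=m$, $A_I$ invertible; $x(I,\beta)$ has coordinates $(A_I)^{-1}\beta$ on $I$ and $0$ elsewhere; $\lambda(I)=(A_I)^{-T}c_I$; $I$ is dual feasible if $A^T\lambda(I)\le c$. $I_1,\dots,I_K$ are exactly the dual feasible bases with $x(I_k,b)\ge0$. (A1): $OPT(b)$ is non-empty and bounded. *)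

(* Defs.v *)
From mathcomp Require Import all_boot all_order all_algebra.
From mathcomp Require Import reals.
Set Implicit Arguments. Unset Strict Implicit. Unset Printing Implicit Defensive.
Import Order.TTheory GRing.Theory Num.Theory.
Local Open Scope ring_scope.

Section LP.
Variables (R : realType) (m d : nat) (A : 'M[R]_(m, d)) (c : 'cV[R]_d).

(* j-th column index of the index set I (listed in increasing order);
   None if j >= #|I| (never happens for a basis, where #|I| = m). *)
Definition colidx (I : {set 'I_d}) (j : 'I_m) : option 'I_d :=
  nth None [seq Some k | k <- enum I] j.

Definition AI (I : {set 'I_d}) : 'M[R]_m :=
  \matrix_(i < m, j < m) oapp (A i) 0 (colidx I j).

Definition cI (I : {set 'I_d}) : 'cV[R]_m :=
  \col_(j < m) oapp (fun k => c k 0) 0 (colidx I j).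

Definition is_basis (I : {set 'I_d}) : Prop :=
  #|I| = m /\ AI I \in unitmx.

(* x(I, beta): coordinates (A_I)^{-1} beta on I, 0 elsewhere *)
Definition xb (I : {set 'I_d}) (beta : 'cV[R]_m) : 'cV[R]_d :=
  \col_(k < d) \sum_(j < m | colidx I j == Some k) (invmx (AI I) *m beta) j 0.

Definition lam (I : {set 'I_d}) : 'cV[R]_m := (invmx (AI I))^T *m cI I.

Definition dual_feasible (I : {set 'I_d}) : Prop :=
  forall k : 'I_d, (A^T *m lam I) k 0 <= c k 0.

Definition feas (beta : 'cV[R]_m) (x : 'cV[R]_d) : Prop :=
  A *m x = beta /\ forall k : 'I_d, 0 <= x k 0.

Definition cost (x : 'cV[R]_d) : R := \sum_(k < d) c k 0 * x k 0.

Definition opt (beta : 'cV[R]_m) (x : 'cV[R]_d) : Prop :=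
  feas beta x /\ forall y, feas beta y -> cost x <= cost y.

(* the bases I_1, ..., I_K: dual feasible bases with x(I, b) >= 0 *)
Definition good_basis (b : 'cV[R]_m) (I : {set 'I_d}) : Prop :=
  is_basis I /\ dual_feasible I /\ forall k : 'I_d, 0 <= xb I b k 0.

End LP.

Definition enorm (R : realType) (m : nat) (v : 'cV[R]_m) : R :=
  Num.sqrt (\sum_(i < m) v i 0 ^+ 2).

(* Main.v *)
Require Import Defs.
From mathcomp Require Import all_boot all_order all_algebra.
From mathcomp Require Import reals.
From mathcomp Require Import zify ring lra.
From Stdlib Require Import Classical.
Set Implicit Arguments. Unset Strict Implicit. Unset Printing Implicit Defensive.
Import Order.TTheory GRing.Theory Num.Theory.
Local Open Scope ring_scope.

Section Basics.
Variables (R : realType) (m d : nat) (A : 'M[R]_(m, d)).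

Lemma colidx_in (J : {set 'I_d}) (j : 'I_m) k : colidx J j = Some k -> k \in J.
Proof.
rewrite /colidx; case: (ltnP j (size (enum J))) => h.
  case E: (enum J) h => [|x0 s] // h.
  rewrite (nth_map x0) //= => [[<-]]; by rewrite -mem_enum E mem_nth.
by rewrite nth_default ?size_map.
Qed.

Lemma colidx_some (J : {set 'I_d}) (hJ : #|J| = m) (j : 'I_m) :
  exists k, colidx J j = Some k.
Proof.
rewrite /colidx; have h : (j < size (enum J))%N by rewrite -cardE hJ.
case E: (enum J) h => [|x0 s] // h.
by exists (nth x0 (x0 :: s) j); rewrite (nth_map x0).
Qed.

Lemma colidx_inj (J : {set 'I_d}) (j1 j2 : 'I_m) k :
  colidx J j1 = Some k -> colidx J j2 = Some k -> j1 = j2.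
Proof.
rewrite /colidx.
case: (ltnP j1 (size (enum J))) => h1; last by rewrite nth_default ?size_map.
case: (ltnP j2 (size (enum J))) => h2; last by move=> _; rewrite nth_default ?size_map.
rewrite !(nth_map k) // => -[e1] -[e2]; apply: val_inj => /=.
by apply/eqP; rewrite -(nth_uniq k h1 h2 (enum_uniq _)) e1 e2.
Qed.

Lemma colidx_surj (J : {set 'I_d}) (hJ : #|J| = m) k :
  k \in J -> exists j : 'I_m, colidx J j = Some k.
Proof.
move=> hk; have hi : (index k (enum J) < m)%N by rewrite -hJ cardE index_mem mem_enum.
exists (Ordinal hi); rewrite /colidx (nth_map k) /=; last by rewrite index_mem mem_enum.
by rewrite nth_index // mem_enum.
Qed.

Lemma sum_col1 (J : {set 'I_d}) k (F : 'I_m -> R) j0 :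
  colidx J j0 = Some k -> \sum_(j | colidx J j == Some k) F j = F j0.
Proof.
move=> h0; rewrite (big_pred1 j0) // => j /=.
apply/eqP/eqP => [h|->] //; exact: colidx_inj h h0.
Qed.

Lemma sum_col0 (J : {set 'I_d}) k (F : 'I_m -> R) :
  k \notin J -> \sum_(j | colidx J j == Some k) F j = 0.
Proof.
move=> hk; rewrite big_pred0 // => j /=; apply/negbTE/eqP => h.
by move: hk; rewrite (colidx_in h).
Qed.

Lemma sum_opt (o : option 'I_d) (F : 'I_d -> R) :
  \sum_(k | o == Some k) F k = oapp F 0 o.
Proof.
case: o => [k0|] /=; last by rewrite big_pred0.
by rewrite (big_pred1 k0) // => k /=; rewrite eq_sym.
Qed.

Lemma exch_col (J : {set 'I_d}) (F : 'I_m -> 'I_d -> R) :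
  \sum_k \sum_(j | colidx J j == Some k) F j k = \sum_j oapp (F j) 0 (colidx J j).
Proof.
rewrite (eq_bigr (fun k => \sum_j (if colidx J j == Some k then F j k else 0)));
  last by move=> k _; rewrite big_mkcond.
rewrite exchange_big; apply: eq_bigr => j _; by rewrite -big_mkcond sum_opt.
Qed.

Definition embed (J : {set 'I_d}) (y : 'cV[R]_m) : 'cV[R]_d :=
  \col_k \sum_(j | colidx J j == Some k) y j 0.

Definition restrict (J : {set 'I_d}) (x : 'cV[R]_d) : 'cV[R]_m :=
  \col_j oapp (fun k => x k 0) 0 (colidx J j).

Lemma A_embed (J : {set 'I_d}) (y : 'cV[R]_m) : A *m embed J y = AI A J *m y.
Proof.
apply/matrixP => i z; rewrite ord1 !mxE.
rewrite (eq_bigr (fun k => \sum_(j | colidx J j == Some k) A i k * y j 0));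
  last by move=> k _; rewrite mxE big_distrr.
rewrite exch_col; apply: eq_bigr => j _; rewrite mxE.
by case: (colidx J j) => [k|] /=; rewrite ?mul0r.
Qed.

Lemma embed_col (J : {set 'I_d}) (y : 'cV[R]_m) (j : 'I_m) k : colidx J j = Some k -> embed J y k 0 = y j 0.
Proof. by move=> h; rewrite mxE (sum_col1 _ h). Qed.

Lemma embed_out (J : {set 'I_d}) (y : 'cV[R]_m) k : k \notin J -> embed J y k 0 = 0.
Proof. by move=> h; rewrite mxE sum_col0. Qed.

Lemma embed_restrict (J : {set 'I_d}) (x : 'cV[R]_d) : #|J| = m -> (forall k, k \notin J -> x k 0 = 0) ->
  embed J (restrict J x) = x.
Proof.
move=> hJ hx; apply/matrixP => k z; rewrite ord1.
case: (boolP (k \in J)) => hk; last by rewrite embed_out // hx.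
have [j hj] := colidx_surj hJ hk.
by rewrite (embed_col _ hj) mxE hj.
Qed.

Lemma basis_unit (J : {set 'I_d}) : (forall y : 'cV[R]_m, AI A J *m y = 0 -> y = 0) -> AI A J \in unitmx.
Proof.
move=> H; rewrite unitmxE unitfE -det_tr; apply/negP => /det0P [v vn0 hv].
have : (AI A J *m v^T) = 0 by rewrite -[AI A J]trmxK -trmx_mul hv trmx0.
move/H => /(congr1 trmx); rewrite trmxK trmx0 => hv0.
by move: vn0; rewrite hv0 eqxx.
Qed.

Lemma basis_of_supp (J : {set 'I_d}) : #|J| = m ->
  (forall x : 'cV[R]_d, (forall k, k \notin J -> x k 0 = 0) -> A *m x = 0 -> x = 0) ->
  is_basis A J.
Proof.
move=> hJ H; split => //; apply: basis_unit => y hy.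
have e : embed J y = 0 by apply: H; [move=> k; exact: embed_out | rewrite A_embed].
apply/matrixP => j z; rewrite ord1 mxE.
have [k hk] := colidx_some hJ j.
by rewrite -(embed_col y hk) e mxE.
Qed.

Lemma xb_embed (J : {set 'I_d}) (beta : 'cV[R]_m) : xb A J beta = embed J (invmx (AI A J) *m beta).
Proof. by []. Qed.

Lemma xb_A (J : {set 'I_d}) (beta : 'cV[R]_m) : is_basis A J -> A *m xb A J beta = beta.
Proof.
move=> [hJ hu]; by rewrite xb_embed A_embed mulmxA mulmxV // mul1mx.
Qed.

Lemma xb_out (J : {set 'I_d}) (beta : 'cV[R]_m) k : k \notin J -> xb A J beta k 0 = 0.
Proof. by move=> h; rewrite xb_embed embed_out. Qed.

Lemma xb_uniq (J : {set 'I_d}) (beta : 'cV[R]_m) (x : 'cV[R]_d) : is_basis A J -> (forall k, k \notin J -> x k 0 = 0) ->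
  A *m x = beta -> xb A J beta = x.
Proof.
move=> [hJ hu] hx hA; rewrite -(embed_restrict hJ hx) in hA *.
by rewrite xb_embed -hA A_embed mulKmx.
Qed.

Definition MJ (J : {set 'I_d}) : 'M[R]_(d, m) :=
  \matrix_(k, i) \sum_(j | colidx J j == Some k) invmx (AI A J) j i.

Lemma xbM (J : {set 'I_d}) (beta : 'cV[R]_m) : xb A J beta = MJ J *m beta.
Proof.
apply/matrixP => k z; rewrite ord1 !mxE.
under [RHS]eq_bigr do rewrite mxE big_distrl.
rewrite exchange_big; apply: eq_bigr => j _; by rewrite mxE.
Qed.

Definition delta (k : 'I_d) : 'cV[R]_d := \col_l (l == k)%:R.

Lemma A_delta k : A *m delta k = col k A.
Proof.
apply/matrixP => i z; rewrite !mxE (bigD1 k) //= mxE eqxx mulr1 big1 ?addr0 //.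
by move=> l /negbTE hl; rewrite mxE hl mulr0.
Qed.

Lemma xb_col (J : {set 'I_d}) k : is_basis A J -> k \in J -> xb A J (col k A) = delta k.
Proof.
move=> hJ hk; apply: xb_uniq => //; last exact: A_delta.
move=> l hl; rewrite mxE; case: eqP => // e; by move: hl; rewrite e hk.
Qed.

Lemma AT_AI (J : {set 'I_d}) (j : 'I_m) k (lm : 'cV[R]_m) : colidx J j = Some k ->
  (A^T *m lm) k 0 = ((AI A J)^T *m lm) j 0.
Proof.
move=> h; rewrite !mxE; apply: eq_bigr => i _; by rewrite !mxE h.
Qed.

Lemma lam_in (J : {set 'I_d}) (c' : 'cV[R]_d) k : is_basis A J -> k \in J -> (A^T *m lam A c' J) k 0 = c' k 0.
Proof.
move=> [hJ hu] hk; have [j hj] := colidx_surj hJ hk.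
rewrite (AT_AI _ hj) /lam mulmxA -trmx_mul mulVmx // trmx1 mul1mx mxE hj.
by [].
Qed.

Lemma lam_uniq (J : {set 'I_d}) (c' : 'cV[R]_d) (lm : 'cV[R]_m) : is_basis A J ->
  (forall k, k \in J -> (A^T *m lm) k 0 = c' k 0) -> lam A c' J = lm.
Proof.
move=> [hJ hu] H.
have e : (AI A J)^T *m lm = cI m c' J.
  apply/matrixP => j z; rewrite ord1; have [k hk] := colidx_some hJ j.
  by rewrite -(AT_AI _ hk) H ?(colidx_in hk) // mxE hk.
by rewrite /lam -e mulmxA -trmx_mul mulmxV // trmx1 mul1mx.
Qed.

Lemma lam0 (J : {set 'I_d}) (c' : 'cV[R]_d) : (forall k, k \in J -> c' k 0 = 0) -> lam A c' J = 0.
Proof.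
move=> H; have e : cI m c' J = 0.
  apply/matrixP => j z; rewrite !mxE.
  case E: (colidx J j) => [k|] //=; exact: H (colidx_in E).
by rewrite /lam e mulmx0.
Qed.

End Basics.


Section Lex.
Variables (R : realType) (n : nat).
Implicit Types u v w : 'rV[R]_n.

Definition lexpos v := exists i : 'I_n, 0 < v 0 i /\ forall j : 'I_n, (j < i)%N -> v 0 j = 0.
Definition lexnn v := v = 0 \/ lexpos v.

Lemma lexposD u v : lexpos u -> lexpos v -> lexpos (u + v).
Proof.
move=> [i [hi Hi]] [j [hj Hj]].
case: (ltngtP i j) => hij.
- exists i; rewrite !mxE Hj // addr0; split => // k hk.
  by rewrite !mxE Hi ?Hj ?addr0 // (ltn_trans hk).
- exists j; rewrite !mxE Hi // add0r; split => // k hk.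
  by rewrite !mxE Hi ?Hj ?addr0 // (ltn_trans hk).
- have e : i = j by apply: val_inj.
  subst j; exists i; rewrite !mxE addr_gt0 //; split => // k hk.
  by rewrite !mxE Hi ?Hj ?addr0.
Qed.

Lemma lexnnD u v : lexnn u -> lexnn v -> lexnn (u + v).
Proof.
move=> [->|hu] [->|hv]; rewrite ?add0r ?addr0; try by [left|right].
by right; apply: lexposD.
Qed.

Lemma lexnn_posD u v : lexnn u -> lexpos v -> lexpos (u + v).
Proof. by move=> [->|hu] hv; rewrite ?add0r //; apply: lexposD. Qed.

Lemma lexposZ a v : 0 < a -> lexpos v -> lexpos (a *: v).
Proof.
move=> ha [i [hi Hi]]; exists i; rewrite !mxE mulr_gt0 //; split => // j hj.
by rewrite !mxE Hi ?mulr0.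
Qed.

Lemma lexnnZ a v : 0 <= a -> lexnn v -> lexnn (a *: v).
Proof.
rewrite le_eqVlt => /orP [/eqP <-|ha] [->|hv]; rewrite ?scale0r ?scaler0; try by left.
by right; apply: lexposZ.
Qed.

Lemma lexpos_neq0 v : lexpos v -> v <> 0.
Proof. by move=> [i [hi _]] e; move: hi; rewrite e mxE ltxx. Qed.

Lemma lexpos_asym v : lexpos v -> lexpos (- v) -> False.
Proof.
move=> [i [hi Hi]] [j [hj Hj]].
case: (ltngtP i j) => hij.
- by move: (Hj _ hij); rewrite mxE => /eqP; rewrite oppr_eq0 => /eqP e; move: hi; rewrite e ltxx.
- by move: (Hi _ hij) hj; rewrite mxE => ->; rewrite oppr0 ltxx.
- have e : i = j by apply: val_inj.
  by subst j; move: hj; rewrite mxE oppr_gt0 => h; move: (lt_trans h hi); rewrite ltxx.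
Qed.

Lemma lex_total v : v = 0 \/ lexpos v \/ lexpos (- v).
Proof.
case: (boolP [exists i : 'I_n, v 0 i != 0]) => [hex|hno]; last first.
  left; apply/matrixP => z i; rewrite ord1 mxE; apply/eqP.
  by move: hno; rewrite negb_exists => /forallP /(_ i); rewrite negbK.
have P0 : exists k, (fun k => [exists i : 'I_n, (val i == k) && (v 0 i != 0)]) k.
  move/existsP: hex => [i hi]; exists (val i); apply/existsP; exists i; by rewrite eqxx.
case: (ex_minnP P0) => k /existsP [i /andP [/eqP hik hvi]] hmin.
have Hi : forall j : 'I_n, (j < i)%N -> v 0 j = 0.
  move=> j hj; apply/eqP; apply: contraTT hj => hvj; rewrite -leqNgt hik.
  by apply: hmin; apply/existsP; exists j; rewrite eqxx.
right; case: (ltgtP (v 0 i) 0) => h.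
- right; exists i; rewrite mxE oppr_gt0; split => // j hj; by rewrite mxE Hi ?oppr0.
- by left; exists i.
- by move: hvi; rewrite h eqxx.
Qed.

Definition lexlt u v := lexpos (v - u).

Lemma lexlt_trans u v w : lexlt u v -> lexlt v w -> lexlt u w.
Proof.
rewrite /lexlt => h1 h2; have := lexposD h2 h1.
by rewrite addrA subrK.
Qed.

Lemma lexlt_irr u : ~ lexlt u u.
Proof. by rewrite /lexlt subrr => /lexpos_neq0. Qed.

Lemma lexlt_total u v : u = v \/ lexlt u v \/ lexlt v u.
Proof.
case: (lex_total (v - u)) => [/eqP|[h|h]].
- by rewrite subr_eq0 => /eqP ->; left.
- by right; left.
- by right; right; rewrite /lexlt -opprB.
Qed.

Lemma lexnn_notlt u v : ~ lexlt v u -> lexnn (v - u).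
Proof.
move=> h; case: (lexlt_total u v) => [->|[h1|h2]].
- by left; rewrite subrr.
- by right.
- by [].
Qed.

Lemma argmax (T : finType) (P : T -> Prop) (f : T -> 'rV[R]_n) :
  (exists x, P x) -> exists x, P x /\ forall y, P y -> ~ lexlt (f x) (f y).
Proof.
move=> [x0 Px0].
suff H : forall s : seq T, (exists x, x \in s /\ P x) ->
  exists x, P x /\ forall y, y \in s -> P y -> ~ lexlt (f x) (f y).
  have [x [Px Hx]] := H (enum T) (ex_intro _ x0 (conj (mem_enum _ x0) Px0)).
  by exists x; split => // y Py; apply: Hx => //; rewrite mem_enum.
elim => [|a s IH]; first by move=> [x []].
move=> [x1 [x1s Px1]]; case: (classic (exists x, x \in s /\ P x)) => [hs|hs].
  have [x [Px Hx]] := IH hs.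
  case: (classic (P a /\ lexlt (f x) (f a))) => [[Pa hxa]|hna].
    exists a; split => // y; rewrite inE => /orP [/eqP ->|ys] Py.
      exact: lexlt_irr.
    by move=> hay; apply: (Hx y ys Py); apply: lexlt_trans hxa hay.
  exists x; split => // y; rewrite inE => /orP [/eqP ->|ys] Py.
    by move=> h; apply: hna.
  exact: Hx.
have Pa : P a.
  move: x1s; rewrite inE => /orP [/eqP <- //|x1s].
  by exfalso; apply: hs; exists x1.
exists a; split => // y; rewrite inE => /orP [/eqP ->|ys] Py.
  exact: lexlt_irr.
by exfalso; apply: hs; exists y.
Qed.

End Lex.


Section Piv.
Variables (R : realType) (m d : nat) (A : 'M[R]_(m, d)) (c : 'cV[R]_d)
  (I : {set 'I_d}) (bt : 'cV[R]_m).

Local Notation n := (d + d).+1.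
Implicit Types (J : {set 'I_d}) (k : 'I_d).

Definition Ct : 'M[R]_(d, n) := \matrix_(k, i)
  if val i == 0%N then c k 0 else if (val i == k.+1) && (k \notin I) then 1
  else if val i == (k.+1 + d)%N then 1 else 0.

Definition Lam (J : {set 'I_d}) (i : 'I_n) : 'cV[R]_m := lam A (col i Ct) J.

Definition Sred (J : {set 'I_d}) : 'M[R]_(d, n) :=
  \matrix_(k, i) (Ct k i - (A^T *m Lam J i) k 0).

Definition Obj (J : {set 'I_d}) : 'rV[R]_n := \row_i (bt^T *m Lam J i) 0 0.

Definition lexdf (J : {set 'I_d}) := forall k, lexnn (row k (Sred J)).

Definition alpha (J : {set 'I_d}) r k := (MJ A J *m A) r k.

Lemma col0_Ct : col ord0 Ct = c.
Proof. by apply/matrixP => k z; rewrite ord1 !mxE. Qed.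

Lemma lexnn0 (v : 'rV[R]_n) : lexnn v -> 0 <= v 0 ord0.
Proof.
move=> [->|[i [hi Hi]]]; first by rewrite mxE.
case: (posnP i) => h.
  have -> : ord0 = i by apply: val_inj.
  exact: ltW.
by rewrite Hi.
Qed.

Lemma lexdf_df J : lexdf J -> dual_feasible A c J.
Proof.
move=> H k; have := lexnn0 (H k); rewrite !mxE /Lam col0_Ct subr_ge0.
by [].
Qed.

Lemma S_in J k i : is_basis A J -> k \in J -> Sred J k i = 0.
Proof. by move=> hJ hk; rewrite mxE /Lam lam_in // !mxE subrr. Qed.

Lemma iK_proof (k : 'I_d) : (k.+1 + d < n)%N.
Proof. by rewrite addSn ltnS ltn_add2r. Qed.

Definition iK (k : 'I_d) : 'I_n := Ordinal (iK_proof k).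

Lemma S_out J k : k \notin J -> Sred J k (iK k) = 1.
Proof.
move=> hk; rewrite mxE /Lam lam0.
  rewrite mulmx0 mxE /= !mxE /= addSn /=.
  have -> : ((k + d).+1 == k.+1) = false.
    by apply/negbTE; rewrite eqSS -{2}(addn0 k) eqn_add2l -lt0n (leq_ltn_trans _ (ltn_ord k)).
  by rewrite eqxx subr0.
move=> j hj; rewrite !mxE /= addSn /=.
have -> : ((k + d).+1 == j.+1) = false.
  apply/negbTE; rewrite eqSS; apply/eqP => e; have := ltn_ord j.
  by rewrite -e ltnNge leq_addl.
case: eqP => // /eqP; rewrite eqSS eqn_add2r => /eqP e.
have e' : k = j by apply: val_inj.
by move: hk; rewrite e' hj.
Qed.

Lemma lexdf_I : is_basis A I -> dual_feasible A c I -> lexdf I.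
Proof.
move=> hI hdf k; case: (boolP (k \in I)) => hk.
  left; apply/matrixP => z i; by rewrite [LHS]mxE S_in // mxE.
right.
have Hlow : forall i : 'I_n, (0 < i <= d)%N -> Sred I k i = Ct k i.
  move=> i /andP [hi1 hi2]; rewrite mxE /Lam lam0 ?mulmx0 ?mxE ?subr0 //.
  move=> j hj; rewrite !mxE.
  have -> : (val i == 0%N) = false by apply/negbTE/eqP; rewrite -[\val i]/(nat_of_ord i); lia.
  rewrite hj andbF.
  have -> : (val i == (j.+1 + d)%N) = false by apply/negbTE/eqP; rewrite -[\val _]/(nat_of_ord _); lia.
  by [].
have hs : 0 <= Sred I k ord0.
  have := hdf k; rewrite [Sred _ _ _]mxE /Lam col0_Ct subr_ge0 mxE. by rewrite mxE.
case: (ltrgt0P (Sred I k ord0)) hs => // [hpos|hz] _.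
  by exists ord0; rewrite mxE; split.
have hk1 : (k.+1 < n)%N by have := ltn_ord k; lia.
exists (Ordinal hk1); rewrite mxE Hlow /=; last by have := ltn_ord k; lia.
rewrite mxE /= eqxx hk /= ltr01; split => // j hj.
rewrite mxE; case: (posnP j) => hj0.
  by have -> : j = ord0 by apply: val_inj.
rewrite Hlow; last by have := ltn_ord k; lia.
rewrite mxE.
have -> : (val j == 0%N) = false by apply/negbTE/eqP; rewrite -[\val j]/(nat_of_ord j); lia.
have -> : (val j == k.+1) = false by apply/negbTE/eqP; rewrite -[\val j]/(nat_of_ord j); lia.
have -> : (val j == (k.+1 + d)%N) = false by apply/negbTE/eqP; rewrite -[\val _]/(nat_of_ord _); lia.
by [].
Qed.

Lemma AT_rho J r k : (A^T *m (row r (MJ A J))^T) k 0 = alpha J r k.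
Proof. rewrite /alpha !mxE; apply: eq_bigr => i _; by rewrite !mxE mulrC. Qed.

Lemma alpha_xb J r k : alpha J r k = xb A J (col k A) r 0.
Proof. rewrite xbM /alpha !mxE; apply: eq_bigr => i _; by rewrite !mxE. Qed.

Lemma alpha_in J r k : is_basis A J -> k \in J -> alpha J r k = (r == k)%:R.
Proof. by move=> hJ hk; rewrite alpha_xb xb_col // mxE. Qed.

Lemma xb_sum J r (y : 'cV[R]_d) : xb A J (A *m y) r 0 = \sum_k alpha J r k * y k 0.
Proof. by rewrite xbM mulmxA mxE. Qed.

Lemma rho_bt J r : (bt^T *m (row r (MJ A J))^T) 0 0 = xb A J bt r 0.
Proof. rewrite xbM !mxE; apply: eq_bigr => i _; by rewrite !mxE mulrC. Qed.

Lemma entryB (M N : 'cV[R]_m) (k : 'I_m) : (M - N) k 0 = M k 0 - N k 0.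
Proof. by rewrite !mxE. Qed.
Lemma entryBd (M N : 'cV[R]_d) k : (M - N) k 0 = M k 0 - N k 0.
Proof. by rewrite !mxE. Qed.
Lemma entryZ a (M : 'cV[R]_d) k : (a *: M) k 0 = a * M k 0.
Proof. by rewrite mxE. Qed.
Lemma rentryB (M N : 'rV[R]_n) i : (M - N) 0 i = M 0 i - N 0 i.
Proof. by rewrite !mxE. Qed.
Lemma rentryZ a (M : 'rV[R]_n) i : (a *: M) 0 i = a * M 0 i.
Proof. by rewrite mxE. Qed.
Lemma rowvE (f : 'I_n -> R) z i : (\row_j f j) z i = f i.
Proof. by rewrite mxE. Qed.
Lemma ObjE J z i : Obj J z i = (bt^T *m Lam J i) 0 0.
Proof. by rewrite mxE. Qed.
Lemma colE (M : 'M[R]_(d, n)) k i : (col i M) k 0 = M k i.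
Proof. by rewrite mxE. Qed.
Lemma SE J k i : Sred J k i = Ct k i - (A^T *m Lam J i) k 0.
Proof. by rewrite mxE. Qed.
Lemma ATlin J (L : 'cV[R]_m) t r k :
  (A^T *m (L - t *: (row r (MJ A J))^T)) k 0 = (A^T *m L) k 0 - t * alpha J r k.
Proof. by rewrite mulmxBr -scalemxAr entryBd entryZ AT_rho. Qed.

Section Pivot.
Variables (J : {set 'I_d}) (r ke : 'I_d).
Hypotheses (hJ : is_basis A J) (hr : r \in J) (hke : ke \notin J)
  (ha : alpha J r ke != 0).
Local Notation J' := (ke |: (J :\ r)).
Local Notation th i := (Sred J ke i / - alpha J r ke).
Local Notation rho := ((row r (MJ A J))^T).

Lemma piv_basis : is_basis A J'.
Proof.
have hcard : #|J'| = m.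
  rewrite cardsU1 in_setD1 (negbTE hke) andbF /=.
  by case: hJ => hc _; rewrite -hc (cardsD1 r J) hr.
apply: basis_of_supp => // x hx hAx.
set w := xb A J (col ke A).
have hwA : A *m w = col ke A by rewrite /w xb_A.
have hwo : forall k, k \notin J -> w k 0 = 0 by move=> k hk; rewrite /w xb_out.
have hwr : w r 0 = alpha J r ke by rewrite alpha_xb.
clearbody w.
set z := x - x ke 0 *: delta R ke + x ke 0 *: w.
have hAz : A *m z = 0.
  by rewrite /z !mulmxDr mulmxN -!scalemxAr A_delta hwA hAx sub0r addNr.
have hzJ : forall k, k \notin J -> z k 0 = 0.
  move=> k hk; rewrite /z !mxE hwo //.
  case: (eqVneq k ke) => [->|hne]; first by rewrite ?eqxx mulr1 mulr0 addr0 subrr.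
  rewrite (hx k) ?mulr0 ?subr0 ?addr0 //.
  by rewrite !inE negb_or hne /= negb_and hk orbT.
have z0 : z = 0.
  have := xb_uniq hJ hzJ hAz; by rewrite xbM mulmx0 => <-.
have hxr : x r 0 = 0.
  apply: hx; rewrite !inE negb_or eqxx /= andbT.
  by apply/eqP => e; move: hke; rewrite -e hr.
have hxke : x ke 0 = 0.
  have := congr1 (fun M : 'cV[R]_d => M r 0) z0; rewrite /z !mxE hxr.
  have -> : (r == ke) = false by apply/negbTE/eqP => e; move: hke; rewrite -e hr.
  rewrite mulr0 subr0 add0r hwr => /eqP; rewrite mulf_eq0 (negbTE ha) orbF.
  by move/eqP.
by move: z0; rewrite /z hxke !scale0r subr0 addr0.
Qed.

Lemma piv_Lam i : Lam J' i = Lam J i - th i *: rho.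
Proof.
apply: lam_uniq piv_basis _ => k; rewrite !inE => /orP [/eqP ->|/andP [hkr hk]].
  rewrite ATlin SE colE; field; exact: ha.
rewrite ATlin (alpha_in _ hJ hk) eq_sym (negbTE hkr) mulr0 subr0 /Lam lam_in //.
Qed.

Lemma piv_S k i : Sred J' k i = Sred J k i + th i * alpha J r k.
Proof. rewrite [LHS]SE [Sred J k i]SE piv_Lam ATlin; ring. Qed.

Lemma piv_Obj z i : Obj J' z i = Obj J z i - xb A J bt r 0 * th i.
Proof.
rewrite !ObjE piv_Lam mulmxBr -scalemxAr.
rewrite (_ : (bt^T *m (Lam J i) - th i *: (bt^T *m rho)) 0 0 =
   (bt^T *m (Lam J i)) 0 0 - th i * (bt^T *m rho) 0 0); last by rewrite !mxE.
by rewrite rho_bt mulrC.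
Qed.

Lemma piv_xb beta : xb A J beta r 0 = 0 -> xb A J' beta = xb A J beta.
Proof.
move=> h0; apply: xb_uniq piv_basis _ (xb_A _ hJ) => k.
rewrite !inE negb_or negb_and negbK => /andP [_ /orP [/eqP ->|hk]] //.
exact: xb_out.
Qed.

End Pivot.

End Piv.


Section Fin.
Variables (R : realType) (m d : nat) (A : 'M[R]_(m, d)) (c : 'cV[R]_d).

Lemma norm_le_enorm (u : 'cV[R]_m) i : `|u i 0| <= enorm u.
Proof.
rewrite /enorm -sqrtr_sqr ler_wsqrtr // (bigD1 i) //= lerDl.
by apply: sumr_ge0 => j _; rewrite sqr_ge0.
Qed.

Lemma enorm_ge0 (u : 'cV[R]_m) : 0 <= enorm u.
Proof. by rewrite /enorm sqrtr_ge0. Qed.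

Lemma ATdot (lm : 'cV[R]_m) (x : 'cV[R]_d) :
  \sum_k (A^T *m lm) k 0 * x k 0 = (lm^T *m (A *m x)) 0 0.
Proof.
have e : lm^T *m (A *m x) = (A^T *m lm)^T *m x by rewrite trmx_mul trmxK mulmxA.
rewrite e mxE; apply: eq_bigr => k _; by rewrite !mxE.
Qed.

Lemma weak_dual J beta z : is_basis A J -> dual_feasible A c J ->
  feas A beta z -> cost c (xb A J beta) <= cost c z.
Proof.
move=> hJ hdf [hAz hz].
have e1 : cost c (xb A J beta) = ((lam A c J)^T *m beta) 0 0.
  rewrite /cost -[in RHS](xb_A beta hJ) -ATdot; apply: eq_bigr => k _.
  case: (boolP (k \in J)) => hk; first by rewrite lam_in.
  by rewrite xb_out // !mulr0.
rewrite e1 -hAz -ATdot /cost; apply: ler_sum => k _.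
by apply: ler_wpM2r; [apply: hz | apply: hdf].
Qed.

Lemma close_pos (b : 'cV[R]_m) :
  exists eps : R, 0 < eps /\ forall bt J r, enorm (bt - b) < eps ->
    0 < xb A J b r 0 -> 0 < xb A J bt r 0.
Proof.
pose B J r := 1 + \sum_i `|MJ A J r i|.
have B1 : forall J r, 1 <= B J r.
  by move=> J r; rewrite lerDl; apply: sumr_ge0 => i _.
pose g (p : {set 'I_d} * 'I_d) :=
  if 0 < xb A p.1 b p.2 0 then B p.1 p.2 / xb A p.1 b p.2 0 else 0.
have g0 : forall p, 0 <= g p.
  move=> p; rewrite /g; case: ifP => // h.
  by apply: divr_ge0; [apply: le_trans (B1 _ _) | apply: ltW].
pose S := \sum_p g p.
have S0 : 0 <= S by apply: sumr_ge0.
have S1 : 0 < 1 + S by apply: ltr_pwDl.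
exists (1 + S)^-1; split; first by rewrite invr_gt0.
move=> bt J r hn hx.
have gle : g (J, r) <= S by rewrite /S (bigD1 (J, r)) //= lerDl; apply: sumr_ge0.
have gJ : g (J, r) = B J r / xb A J b r 0 by rewrite /g /= hx.
have hB : 0 < B J r by apply: lt_le_trans (B1 _ _).
have Beps : B J r * (1 + S)^-1 < xb A J b r 0.
  have h1 : B J r / xb A J b r 0 < 1 + S.
    by rewrite -gJ; apply: le_lt_trans gle _; apply: ltr_pwDl.
  rewrite ltr_pdivrMr // in h1; by rewrite ltr_pdivrMr // mulrC.
have e : xb A J bt = xb A J b + xb A J (bt - b).
  by rewrite !xbM mulmxBr addrC subrK.
rewrite e mxE.
set dl := xb A J (bt - b) r 0.
set en := enorm (bt - b).
set eps := (1 + S)^-1.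
have hdl : `|dl| <= (B J r - 1) * en.
  rewrite /dl xbM mxE /B addrAC subrr add0r mulr_suml.
  apply: le_trans (ler_norm_sum _ _ _) _; apply: ler_sum => i _.
  by rewrite normrM ler_wpM2l // norm_le_enorm.
have h2 : (B J r - 1) * en <= (B J r - 1) * eps.
  by rewrite ler_wpM2l ?subr_ge0 // ltW.
have heps : 0 < eps by rewrite invr_gt0.
have h3 : - dl <= `|dl| by rewrite -normrN ler_norm.
have h4 : (B J r - 1) * eps = B J r * eps - eps by ring.
rewrite -/eps in Beps; clearbody eps en dl; lra.
Qed.

End Fin.


Lemma rvD (R : realType) p (M N : 'rV[R]_p) z i : (M + N) z i = M z i + N z i.
Proof. by rewrite !mxE. Qed.
Lemma rvB (R : realType) p (M N : 'rV[R]_p) z i : (M - N) z i = M z i - N z i.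
Proof. by rewrite !mxE. Qed.
Lemma rvZ (R : realType) p a (M : 'rV[R]_p) z i : (a *: M) z i = a * M z i.
Proof. by rewrite !mxE. Qed.
Lemma rowE' (R : realType) q p (M : 'M[R]_(q, p)) k z i : (row k M) z i = M k i.
Proof. by rewrite !mxE. Qed.
Lemma rowfE (R : realType) p (f : 'I_p -> R) z i : (\row_j f j) z i = f i.
Proof. by rewrite !mxE. Qed.

Unset Implicit Arguments.

Theorem lemma4p2 (R : realType) (m d : nat) (A : 'M[R]_(m, d))
    (b : 'cV[R]_m) (c : 'cV[R]_d)
    (hmd : (m <= d)%N) (hrank : \rank A = m)
    (A1_nonempty : exists x, opt A c b x)
    (A1_bounded : exists M : R, forall x, opt A c b x -> forall k, `|x k 0| <= M)
    (hb : b != 0) :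
  exists eps : R, 0 < eps /\
    forall bt : 'cV[R]_m, (exists x, feas A bt x) -> enorm (bt - b) < eps ->
    forall I : {set 'I_d}, good_basis A c b I ->
    exists J : {set 'I_d}, good_basis A c b J /\ xb A J b = xb A I b /\
      opt A c bt (xb A J bt).
Proof.
have [eps [heps Hclose]] := close_pos A b.
exists eps; split => // bt [y hy] hn I [hI [hdfI hvI]].
set v := xb A I b.
pose P J := is_basis A J /\ lexdf A c I J /\ xb A J b = v.
have P_I : P I by split; [|split] => //; apply: lexdf_I.
have [J [[hJ [hlJ hvJ]] Jmax]] := argmax (Obj A c I bt) (ex_intro P I P_I).
have hpos : forall k, 0 <= xb A J bt k 0.
  move=> r; rewrite leNgt; apply/negP => hneg.
  case: (boolP (r \in J)) => hr; last by move: hneg; rewrite xb_out // ltxx.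
  have hvr : xb A J b r 0 = 0.
    have h0 : 0 <= xb A J b r 0 by rewrite hvJ; exact: hvI r.
    move: h0; rewrite le_eqVlt => /orP [/eqP <- //|h].
    by have := Hclose bt J r hn h; rewrite ltNge ltW.
  have [ke0 hke0] : exists k, alpha A J r k < 0.
    apply: NNPP => hno.
    have : 0 <= xb A J bt r 0.
      case: hy => hAy hy0; rewrite -hAy xb_sum; apply: sumr_ge0 => k _.
      apply: mulr_ge0 => //; rewrite leNgt; apply/negP => h; apply: hno; by exists k.
    by rewrite leNgt hneg.
  pose g k : 'rV[R]_((d + d).+1) := (- alpha A J r k)^-1 *: row k (Sred A c I J).
  have [ke [hake kmin]] :=
    argmax (fun k => - g k) (ex_intro (fun k => alpha A J r k < 0) ke0 hke0).
  have hke : ke \notin J.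
    apply/negP => h; move: hake; rewrite (alpha_in _ hJ h) ltNge.
    by rewrite ler0n.
  have ha : alpha A J r ke != 0 by rewrite (lt_eqF hake).
  have hB' := piv_basis hJ hr hke ha.
  pose th : 'rV[R]_((d + d).+1) := \row_i (Sred A c I J ke i / - alpha A J r ke).
  have thE : th = g ke.
    by apply/matrixP => z i; rewrite rowfE rvZ rowE' mulrC.
  have thnn : lexnn th.
    rewrite thE; apply: lexnnZ; last exact: hlJ.
    by rewrite invr_ge0 oppr_ge0 ltW.
  have thpos : lexpos th.
    case: thnn => // h0; exfalso.
    have := congr1 (fun M : 'rV[R]_((d + d).+1) => M 0 (iK ke)) h0.
    rewrite /= rowfE S_out // mxE mul1r => /eqP; rewrite invr_eq0 oppr_eq0.
    by rewrite (negbTE ha).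
  have hlJ' : lexdf A c I (ke |: (J :\ r)).
    move=> k.
    have erow : row k (Sred A c I (ke |: (J :\ r))) = row k (Sred A c I J) + alpha A J r k *: th.
      apply/matrixP => z i; rewrite rowE' (piv_S _ _ hJ hr hke ha) rvD rvZ rowE' rowfE.
      by rewrite mulrC.
    case: (ltP (alpha A J r k) 0) => hak.
      have hm := kmin k hak.
      have hm' : ~ lexlt (g k) (g ke).
        by move=> h; apply: hm; rewrite /lexlt opprK addrC.
      have hnn := lexnn_notlt hm'.
      have -> : row k (Sred A c I (ke |: (J :\ r))) = (- alpha A J r k) *: (g k - th).
        rewrite erow thE scalerBr /g !scalerA mulrV ?scale1r.
          by rewrite mulNr scaleNr opprK.
        by rewrite unitfE oppr_eq0 (lt_eqF hak).
      by apply: lexnnZ; [rewrite oppr_ge0 ltW | rewrite thE].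
    by rewrite erow; apply: lexnnD (hlJ k) (lexnnZ hak thnn).
  have hvJ' : xb A (ke |: (J :\ r)) b = v by rewrite (piv_xb hJ hr hke ha hvr) hvJ.
  have hObj : lexlt (Obj A c I bt J) (Obj A c I bt (ke |: (J :\ r))).
    rewrite /lexlt.
    have -> : Obj A c I bt (ke |: (J :\ r)) - Obj A c I bt J = (- xb A J bt r 0) *: th.
      apply/matrixP => z i; rewrite rvB (piv_Obj _ _ _ hJ hr hke ha) rvZ /th rowfE.
      rewrite [X in _ = _ * X]mxE; ring.
    by apply: lexposZ => //; rewrite oppr_gt0.
  by apply: (Jmax _ (conj hB' (conj hlJ' hvJ'))).
exists J; split; [split; [|split]|split] => //.
- exact: lexdf_df hlJ.
- by move=> k; rewrite hvJ; exact: hvI k.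
split; first by split; [exact: xb_A | exact: hpos].
move=> z hz; exact: weak_dual hJ (lexdf_df hlJ) hz.
Qed.
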